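(* Let $L=\mathbb{C}(x_1,y_1,z_1,x_2,y_2,z_2)$ with $\mathbb{Z}/3\mathbb{Z}$ acting by simultaneous cyclic permutation of $(x_1,y_1,z_1)$ and $(x_2,y_2,z_2)$. The subfield of $L$ generated by $F_1(x_1,y_1,z_1),F_2(x_1,y_1,z_1),F_3(x_1,y_1,z_1)$, $F_1(x_2,y_2,z_2)$, $G_1(x_1,y_1,z_1,x_2,y_2,z_2)$, and $G_2(x_1,y_1,z_1,x_2,y_2,z_2)$ equals $K=\mathbb{C}(a_1,a_2,b_1^3,b_1c_1,b_1c_2,c_1b_2)$, and $K=L^{\mathbb{Z}/3\mathbb{Z}}$. In other words, every $\mathbb{Z}/3\mathbb{Z}$-invariant rational function of these six variables is a rational function of these six functions.
   Context: Let $\zeta=e^{2\pi i/3}$ and for $\ell=1,2$ set $a_\ell=x_\ell+y_\ell+z_\ell$, $b_\ell=x_\ell+\zeta y_\ell+\zeta^2 z_\ell$, $c_\ell=x_\ell+\zeta^2 y_\ell+\zeta z_\ell$. For a triple $(x,y,z)$ with corresponding $a,b,c$, $F_1=a$, $F_2=\frac{b^2}{c}+\frac{c^2}{b}$, $F_3=\frac{1}{i}\left(\frac{b^2}{c}-\frac{c^2}{b}\right)$. $G_1$ and $G_2$ are the real and imaginary parts of $b_1c_2$. The generator of $\mathbb{Z}/3\mathbb{Z}$ multiplies $b_1,b_2$ by $\zeta$ and $c_1,c_2$ by $\zeta^2$. *)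

(* Defs.v *)
From HB Require Import structures.
From mathcomp Require Import all_boot all_order all_algebra.
From mathcomp Require Import fraction.
From mathcomp.multinomials Require Import mpoly.
From mathcomp.real_closed Require Import complex.

Set Implicit Arguments.
Unset Strict Implicit.
Unset Printing Implicit Defensive.

Import Order.TTheory GRing.Theory Num.Theory.
Local Open Scope ring_scope.
Local Open Scope complex_scope.

Section Defs.
Variable R : rcfType.

Definition Cx := R[i].

Definition P6 := {mpoly Cx[6]}.
Definition L6 := {fraction P6}.

Definition tofL (p : P6) : L6 := @FracField.tofrac P6 p.
Definition cstL (c : Cx) : L6 := tofL (c%:MP_[6]).

Definition var (i : 'I_6) : L6 := tofL 'X_i.
Definition x1 : L6 := var (@Ordinal 6 0 isT).
Definition y1 : L6 := var (@Ordinal 6 1 isT).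
Definition z1 : L6 := var (@Ordinal 6 2 isT).
Definition x2 : L6 := var (@Ordinal 6 3 isT).
Definition y2 : L6 := var (@Ordinal 6 4 isT).
Definition z2 : L6 := var (@Ordinal 6 5 isT).

(* zeta = e^{2 pi i/3} = -1/2 + i sqrt(3)/2, and the imaginary unit. *)
Definition zeta : Cx := (- (1 / 2%:R)) +i* (Num.sqrt 3%:R / 2%:R).
Definition iC : Cx := 'i.

Definition aF (x y z : L6) : L6 := x + y + z.
Definition bF (x y z : L6) : L6 := x + cstL zeta * y + cstL (zeta ^+ 2) * z.
Definition cF (x y z : L6) : L6 := x + cstL (zeta ^+ 2) * y + cstL zeta * z.

Definition a1 := aF x1 y1 z1.  Definition b1 := bF x1 y1 z1.
Definition c1 := cF x1 y1 z1.  Definition a2 := aF x2 y2 z2.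
Definition b2 := bF x2 y2 z2.  Definition c2 := cF x2 y2 z2.

Definition F1 (x y z : L6) : L6 := aF x y z.
Definition F2 (x y z : L6) : L6 :=
  (bF x y z) ^+ 2 / cF x y z + (cF x y z) ^+ 2 / bF x y z.
Definition F3 (x y z : L6) : L6 :=
  (cstL iC)^-1 * ((bF x y z) ^+ 2 / cF x y z - (cF x y z) ^+ 2 / bF x y z).

(* G_1, G_2 = formal real and imaginary parts of b1*c2 (variables real,
   so that the conjugate of b1*c2 is c1*b2). *)
Definition G1 : L6 := (b1 * c2 + c1 * b2) / 2%:R.
Definition G2 : L6 := (b1 * c2 - c1 * b2) / (cstL (2%:R * iC)).

Definition evalL (g : 'I_6 -> L6) (p : P6) : L6 := mmap cstL g p.
Definition gen_subfield (g : 'I_6 -> L6) (f : L6) : Prop :=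
  exists p q : P6, evalL g q != 0 /\ f = evalL g p / evalL g q.

(* The Z/3Z action: generator sigma cycles x1->y1->z1->x1 and x2->y2->z2->x2
   simultaneously, i.e. the permutation of variable indices below. *)
Definition sigma_idx (i : 'I_6) : 'I_6 :=
  match val i with
  | 0 => @Ordinal 6 1 isT | 1 => @Ordinal 6 2 isT | 2 => @Ordinal 6 0 isT
  | 3 => @Ordinal 6 4 isT | 4 => @Ordinal 6 5 isT | _ => @Ordinal 6 3 isT
  end.
Definition sigmaP (p : P6) : P6 := mmap (@mpolyC 6 Cx) (fun i => 'X_(sigma_idx i)) p.
Definition z3_invariant (f : L6) : Prop :=
  exists p q : P6, q != 0 /\ f = tofL p / tofL q /\
                   tofL (sigmaP p) / tofL (sigmaP q) = f.

Definition gensF (i : 'I_6) : L6 :=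
  match val i with
  | 0 => F1 x1 y1 z1 | 1 => F2 x1 y1 z1 | 2 => F3 x1 y1 z1
  | 3 => F1 x2 y2 z2 | 4 => G1 | _ => G2
  end.
Definition gensK (i : 'I_6) : L6 :=
  match val i with
  | 0 => a1 | 1 => a2 | 2 => b1 ^+ 3 | 3 => b1 * c1 | 4 => b1 * c2 | _ => c1 * b2
  end.
End Defs.

(* Main.v *)
Require Import Defs.
From HB Require Import structures.
From mathcomp Require Import all_boot all_order all_algebra.
From mathcomp Require Import fraction.
From mathcomp.multinomials Require Import mpoly.
From mathcomp.real_closed Require Import complex.
From mathcomp Require Import ring.
Set Implicit Arguments.
Unset Strict Implicit.
Unset Printing Implicit Defensive.
Import Order.TTheory GRing.Theory Num.Theory.
Local Open Scope ring_scope.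
Local Open Scope complex_scope.
Lemma addfrac (F : fieldType) (a b c d : F) : b != 0 -> d != 0 -> a / b + c / d = (a * d + c * b) / (b * d).
Proof. move=> hb hd. field. exact/andP. Qed.


Lemma idF (F : fieldType) (b c : F) : b != 0 -> c != 0 ->
  b ^+ 2 / c = b ^+ 3 / (b * c) /\ c ^+ 2 / b = (b * c) ^+ 2 / b ^+ 3.
Proof. move=> hb hc; split; field; rewrite ?hb ?hc //. Qed.

Lemma idU (F : fieldType) (b c I : F) : b != 0 -> c != 0 -> I != 0 -> (2%:R : F) != 0 ->
  b ^+ 3 = (((b ^+ 2 / c + c ^+ 2 / b) + I * (I^-1 * (b ^+ 2 / c - c ^+ 2 / b))) / 2%:R) ^+ 2 *
           (((b ^+ 2 / c + c ^+ 2 / b) - I * (I^-1 * (b ^+ 2 / c - c ^+ 2 / b))) / 2%:R) /\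
  b * c = (((b ^+ 2 / c + c ^+ 2 / b) + I * (I^-1 * (b ^+ 2 / c - c ^+ 2 / b))) / 2%:R) *
           (((b ^+ 2 / c + c ^+ 2 / b) - I * (I^-1 * (b ^+ 2 / c - c ^+ 2 / b))) / 2%:R).
Proof. move=> hb hc hI h2; split; field; rewrite ?hb ?hc ?hI ?h2 //. Qed.

Lemma idG (F : fieldType) (u v I : F) : I != 0 -> (2%:R : F) != 0 ->
  u = (u + v) / 2%:R + I * ((u - v) / (2%:R * I)) /\
  v = (u + v) / 2%:R - I * ((u - v) / (2%:R * I)).
Proof. move=> hI h2; split; field; rewrite ?hI ?h2 //. Qed.

Lemma cube (T : comRingType) (w : T) : 1 + w + w ^+ 2 = 0 -> w ^+ 3 = 1.
Proof.
move=> h; have : w ^+ 3 - 1 = (w - 1) * (1 + w + w ^+ 2) by ring.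
by rewrite h mulr0 => /eqP; rewrite subr_eq0 => /eqP.
Qed.

Lemma by_rel (T : comRingType) (w l r q : T) :
  1 + w + w ^+ 2 = 0 -> r - l = (1 + w + w ^+ 2) * q -> l = r.
Proof. by move=> hw; rewrite hw mul0r => /eqP; rewrite subr_eq0 => /eqP. Qed.

Lemma rotB (T : comRingType) (w x y z : T) : w ^+ 3 = 1 ->
  y + w * z + w ^+ 2 * x = w ^+ 2 * (x + w * y + w ^+ 2 * z).
Proof.
move=> h3; have -> : w ^+ 2 * (x + w * y + w ^+ 2 * z) = w ^+ 2 * x + w ^+ 3 * y + w ^+ 3 * (w * z) by ring.
rewrite h3; ring.
Qed.

Lemma rotC (T : comRingType) (w x y z : T) : w ^+ 3 = 1 ->
  y + w ^+ 2 * z + w * x = w * (x + w ^+ 2 * y + w * z).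
Proof.
move=> h3; have -> : w * (x + w ^+ 2 * y + w * z) = w * x + w ^+ 3 * y + w ^+ 2 * z by ring.
rewrite h3; ring.
Qed.

Lemma pow3_w (T : comRingType) (w u : T) : w ^+ 3 = 1 -> (w ^+ 2 * u) ^+ 3 = u ^+ 3.
Proof. move=> h3; have -> : (w ^+ 2 * u) ^+ 3 = (w ^+ 3) ^+ 2 * u ^+ 3 by ring. by rewrite h3 expr1n mul1r. Qed.

Lemma pow_w1 (T : comRingType) (w u v : T) : w ^+ 3 = 1 -> (w ^+ 2 * u) * (w * v) = u * v.
Proof. move=> h3; have -> : (w ^+ 2 * u) * (w * v) = w ^+ 3 * (u * v) by ring. by rewrite h3 mul1r. Qed.

Lemma pow_w2 (T : comRingType) (w u v : T) : w ^+ 3 = 1 -> (w * u) * (w ^+ 2 * v) = u * v.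
Proof. move=> h3; have -> : (w * u) * (w ^+ 2 * v) = w ^+ 3 * (u * v) by ring. by rewrite h3 mul1r. Qed.

Lemma pow3_w1 (T : comRingType) (w u : T) : w ^+ 3 = 1 -> (w * u) ^+ 3 = u ^+ 3.
Proof. move=> h3; have -> : (w * u) ^+ 3 = w ^+ 3 * u ^+ 3 by ring. by rewrite h3 mul1r. Qed.

Lemma decD (T : comRingType) (b c s0 s1 s2 t0 t1 t2 : T) :
  (s0 + s1 * b + s2 * c) + (t0 + t1 * b + t2 * c) = (s0 + t0) + (s1 + t1) * b + (s2 + t2) * c.
Proof. ring. Qed.

Lemma decM (F : fieldType) (be ga Pp Bb s0 s1 s2 t0 t1 t2 : F) :
  be * ga = Pp -> be ^+ 3 = Bb -> Pp != 0 -> Bb != 0 ->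
  (s0 + s1 * be + s2 * ga) * (t0 + t1 * be + t2 * ga) =
  (s0 * t0 + (s1 * t2 + s2 * t1) * Pp) + (s0 * t1 + s1 * t0 + s2 * t2 * (Pp ^+ 2 / Bb)) * be
  + (s0 * t2 + s2 * t0 + s1 * t1 * (Bb / Pp)) * ga.
Proof.
move=> <- <-; rewrite mulf_eq0 negb_or => /andP [hb hc] _.
field; rewrite ?hb ?hc //.
Qed.

Lemma shiftE (T : comRingType) (w s0 s1 s2 b c : T) : w ^+ 3 = 1 ->
  [/\ s0 + s1 * (w ^+ 2 * b) + s2 * (w * c) = s0 + (s1 * w ^+ 2) * b + (s2 * w) * c,
      s0 + s1 * (w * b) + s2 * (w ^+ 2 * c) = s0 + (s1 * w ^+ 2) * (w ^+ 2 * b) + (s2 * w) * (w * c) &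
      s0 + s1 * b + s2 * c = s0 + (s1 * w ^+ 2) * (w * b) + (s2 * w) * (w ^+ 2 * c)].
Proof.
move=> h3; split; first by ring.
  have -> : s0 + (s1 * w ^+ 2) * (w ^+ 2 * b) + (s2 * w) * (w * c) =
            s0 + s1 * (w ^+ 3 * (w * b)) + s2 * (w ^+ 2 * c) by ring.
  by rewrite h3 mul1r.
have -> : s0 + (s1 * w ^+ 2) * (w * b) + (s2 * w) * (w ^+ 2 * c) =
          s0 + s1 * (w ^+ 3 * b) + s2 * (w ^+ 3 * c) by ring.
by rewrite h3 !mul1r.
Qed.

Lemma tripleE (F : fieldType) (w x y z b' c' k : F) :
  1 + w + w ^+ 2 = 0 -> 3%:R * k = 1 -> b' != 0 -> c' != 0 ->
  let s0 := (x + y + z) * k in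
  let s1 := k * ((c' * (x + w * y + w ^+ 2 * z)) / (b' * c')) in
  let s2 := k * ((b' * (x + w ^+ 2 * y + w * z)) / (b' * c')) in
  [/\ x = s0 + s1 * b' + s2 * c', y = s0 + s1 * (w ^+ 2 * b') + s2 * (w * c') &
      z = s0 + s1 * (w * b') + s2 * (w ^+ 2 * c')].
Proof.
move=> hw hk hb hc s0 s1 s2.
have e1 : forall u, s1 * (u * b') = u * (k * (x + w * y + w ^+ 2 * z)).
  by move=> u; rewrite /s1; field; rewrite hb hc.
have e2 : forall u, s2 * (u * c') = u * (k * (x + w ^+ 2 * y + w * z)).
  by move=> u; rewrite /s2; field; rewrite hb hc.
have e1' : s1 * b' = k * (x + w * y + w ^+ 2 * z) by rewrite -[b']mul1r e1 mul1r.
have e2' : s2 * c' = k * (x + w ^+ 2 * y + w * z) by rewrite -[c']mul1r e2 mul1r.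
split.
- rewrite e1' e2' /s0; transitivity (3%:R * k * x); first by rewrite hk mul1r.
  apply: (by_rel (q := (y + z) * k)); [exact hw | ring].
- rewrite e1 e2 /s0; transitivity (3%:R * k * y); first by rewrite hk mul1r.
  apply: (by_rel (q := (x + 2%:R * (w - 1) * y + (1 - w + w ^+ 2) * z) * k)); first exact hw. ring.
- rewrite e1 e2 /s0; transitivity (3%:R * k * z); first by rewrite hk mul1r.
  apply: (by_rel (q := (x + (1 - w + w ^+ 2) * y + 2%:R * (w - 1) * z) * k)); first exact hw. ring.
Qed.

Lemma avg (F : fieldType) (w X s0 s1 s2 b c : F) : 1 + w + w ^+ 2 = 0 -> (3%:R : F) != 0 ->
  X = s0 + s1 * b + s2 * c -> X = s0 + s1 * (w ^+ 2 * b) + s2 * (w * c) ->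
  X = s0 + s1 * (w * b) + s2 * (w ^+ 2 * c) -> X = s0.
Proof.
move=> hw h3 e1 e2 e3.
have e : X + X + X = 3%:R * s0 + (s1 * b + s2 * c) * (1 + w + w ^+ 2).
  rewrite {1}e1 {1}e2 {1}e3; ring.
rewrite hw mulr0 addr0 in e.
apply: (mulfI h3); rewrite -e; ring.
Qed.

Lemma cross_mul (F : fieldType) (a b c d : F) : b != 0 -> d != 0 -> a / b = c / d -> a * d = c * b.
Proof. move=> hb hd e; rewrite -[a](divfK hb) e; field; exact hd. Qed.

Lemma rot3 (T : zmodType) (x y z : T) : y + z + x = x + y + z.
Proof. by rewrite [y + z + x]addrC addrA. Qed.

Section Main.
Variable R : rcfType.
Local Notation C := (Cx R).
Local Notation P := (P6 R).
Local Notation L := (L6 R).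
Lemma zeta_rel : 1 + zeta R + zeta R ^+ 2 = 0.
Proof.
rewrite /zeta expr2 /=.
apply/eqP; rewrite eq_complex /=.
have h3 : Num.sqrt (3%:R : R) ^+ 2 = 3%:R by rewrite sqr_sqrtr // ler0n.
set s := Num.sqrt _ in h3 *.
apply/andP; split; apply/eqP.
  have -> : 1 - 1 / 2 + (- (1 / 2) * - (1 / 2) - s / 2 * (s / 2)) = (3 - s^+2)/4 :> R by field.
  by rewrite h3 subrr mul0r.
by field.
Qed.
Lemma iC_neq0 : iC R != 0.
Proof. by rewrite /iC eq_complex /= oner_eq0 andbF. Qed.
Lemma natC_neq0 n : (n.+1%:R : Cx R) != 0.
Proof. by rewrite pnatr_eq0. Qed.

Lemma tofLD (p q : P) : tofL (p + q) = tofL p + tofL q.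
Proof. exact: tofracD. Qed.
Lemma tofLM (p q : P) : tofL (p * q) = tofL p * tofL q.
Proof. exact: tofracM. Qed.
Lemma tofLN (p : P) : tofL (- p) = - tofL p.
Proof. exact: tofracN. Qed.
Lemma tofL1 : tofL (1 : P) = 1.
Proof. exact: tofrac1. Qed.
Lemma tofL0 : tofL (0 : P) = 0.
Proof. exact: tofrac0. Qed.
Lemma tofL_eq0 (p : P) : (tofL p == 0) = (p == 0).
Proof. exact: tofrac_eq0. Qed.
Lemma tofL_inj : injective (@tofL R).
Proof. by move=> p q /eqP; rewrite /tofL tofrac_eq => /eqP. Qed.

Lemma cstL_zmod : zmod_morphism (@cstL R).
Proof. by move=> x y; rewrite /cstL /tofL rmorphB tofracB. Qed.
HB.instance Definition _ := GRing.isZmodMorphism.Build C L (@cstL R) cstL_zmod.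
Lemma cstL_mon : monoid_morphism (@cstL R).
Proof. by split; [rewrite /cstL /tofL mpolyC1 tofrac1 | move=> x y; rewrite /cstL /tofL mpolyCM tofracM]. Qed.
HB.instance Definition _ := GRing.isMonoidMorphism.Build C L (@cstL R) cstL_mon.

Lemma cstL_eq0 (c : C) : (cstL c == 0) = (c == 0).
Proof. by rewrite /cstL tofL_eq0 mpolyC_eq0. Qed.

Lemma P6_ind (Pr : P -> Prop) :
  (forall c, Pr c%:MP) -> (forall i, Pr 'X_i) ->
  (forall p q, Pr p -> Pr q -> Pr (p + q)) ->
  (forall p q, Pr p -> Pr q -> Pr (p * q)) -> forall p, Pr p.
Proof.
move=> hC hX hD hM p; elim/mpolyind: p => [|c m p _ _ hp].
  by rewrite -mpolyC0; apply: (hC).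
apply: (hD) => //; rewrite -mul_mpolyC; apply: (hM) => //.
rewrite mpolyXE_id; apply: (big_ind Pr); first by rewrite -mpolyC1; apply: (hC).
  exact: hM.
move=> i _; elim: (m i) => [|k ih]; first by rewrite expr0 -mpolyC1.
by rewrite exprS; apply: (hM).
Qed.

Lemma evalLD g (p q : P) : evalL g (p + q) = evalL g p + evalL (g : 'I_6 -> L) q.
Proof. exact: mmapD. Qed.
Lemma evalLM g (p q : P) : evalL g (p * q) = evalL g p * evalL (g : 'I_6 -> L) q.
Proof. exact: rmorphM. Qed.
Lemma evalLC g (c : C) : evalL (g : 'I_6 -> L) c%:MP = cstL c.
Proof. exact: mmapC. Qed.
Lemma evalLX g i : evalL g 'X_i = (g : 'I_6 -> L) i.
Proof. by rewrite /evalL mmapX mmap1U. Qed.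
Lemma evalL1 g : evalL (g : 'I_6 -> L) 1 = 1.
Proof. by rewrite -mpolyC1 evalLC rmorph1. Qed.

Lemma sigmaPD (p q : P) : sigmaP (p + q) = sigmaP p + sigmaP q.
Proof. exact: mmapD. Qed.
Lemma sigmaPM (p q : P) : sigmaP (p * q) = sigmaP p * sigmaP q.
Proof. exact: rmorphM. Qed.
Lemma sigmaPC (c : C) : sigmaP c%:MP = c%:MP.
Proof. exact: mmapC. Qed.
Lemma sigmaPX i : sigmaP ('X_i : P) = 'X_(sigma_idx i).
Proof. by rewrite /sigmaP mmapX mmap1U. Qed.


Record subf (S : L -> Prop) := Subf {
  sC : forall c, S (cstL c);
  sD : forall x y, S x -> S y -> S (x + y);
  sN : forall x, S x -> S (- x);
  sM : forall x y, S x -> S y -> S (x * y);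
  sV : forall x, S x -> S x^-1 }.

Lemma sX S (H : subf S) x n : S x -> S (x ^+ n).
Proof.
move=> hx; elim: n => [|n ih]; first by rewrite expr0 -(rmorph1 (@cstL R)); apply: (sC H).
by rewrite exprS; apply: (sM H).
Qed.

Lemma gen_subf (g : 'I_6 -> L) : subf (gen_subfield g).
Proof.
split.
- move=> c; exists c%:MP, 1; rewrite evalL1 oner_neq0 evalLC divr1; split=> //.
- move=> x y [p [q [hq ->]]] [p' [q' [hq' ->]]].
  exists (p * q' + p' * q), (q * q'); rewrite evalLM; split; first exact (mulf_neq0 hq hq').
  rewrite evalLD !evalLM; exact (addfrac _ _ hq hq').
- move=> x [p [q [hq ->]]]; exists (- p), q; split; first exact hq.
  by rewrite -mulNr /evalL mmapN.
- move=> x y [p [q [hq ->]]] [p' [q' [hq' ->]]].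
  exists (p * p'), (q * q'); rewrite !evalLM; split; first exact (mulf_neq0 hq hq').
  by rewrite invfM mulrACA.
- move=> x [p [q [hq ->]]].
  have [hp|hp] := eqVneq (evalL g p) 0.
    exists 0, 1; rewrite evalL1 oner_neq0 hp mul0r invr0; split=> //.
    by rewrite /evalL mmap0 mul0r.
  exists q, p; split; first exact hp.
  by rewrite invfM invrK mulrC.
Qed.

Lemma gen_in (g : 'I_6 -> L) i : gen_subfield g (g i).
Proof. by exists 'X_i, 1; rewrite evalL1 oner_neq0 evalLX divr1. Qed.

Lemma gen_min (g : 'I_6 -> L) S : subf S -> (forall i, S (g i)) ->
  forall f, gen_subfield g f -> S f.
Proof.
move=> H hg f [p [q [_ ->]]].
have ev : forall p, S (evalL g p).
  elim/P6_ind => [c|i|p1 q1 h1 h2|p1 q1 h1 h2].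
  - by rewrite evalLC; apply: (sC H).
  - by rewrite evalLX.
  - by rewrite evalLD; apply: (sD H).
  - by rewrite evalLM; apply: (sM H).
by apply: (sM H) => //; apply: (sV H).
Qed.

Ltac solveS H := repeat match goal with
 | h : ?S ?x |- ?S ?x => exact h
 | |- _ (cstL _) => apply: (sC H)
 | |- _ (_ + _) => apply: (sD H)
 | |- _ (- _) => apply: (sN H)
 | |- _ (_ * _) => apply: (sM H)
 | |- _ (_ ^-1) => apply: (sV H)
 | |- _ (_ ^+ _) => apply: (sX H)
 end.


Lemma natL_neq0 n : (n.+1%:R : L) != 0.
Proof. rewrite -(rmorph_nat (@cstL R)) cstL_eq0; exact: natC_neq0. Qed.
Lemma iL_neq0 : cstL (iC R) != 0.
Proof. rewrite cstL_eq0; exact: iC_neq0. Qed.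

Definition wL : L := cstL (zeta R).
Lemma wL2 : cstL (zeta R ^+ 2) = wL ^+ 2.
Proof. by rewrite rmorphXn. Qed.
Lemma wL_rel : 1 + wL + wL ^+ 2 = 0.
Proof. by rewrite /wL -rmorphXn -(rmorph1 (@cstL R)) -!rmorphD zeta_rel rmorph0. Qed.

Definition pX (k : nat) (h : (k < 6)%N) : P := 'X_(Ordinal h).
Definition pB (u v : C) (i j k : nat) (hi : (i < 6)%N) (hj : (j < 6)%N) (hk : (k < 6)%N) : P :=
  pX hi + u%:MP * pX hj + v%:MP * pX hk.
Definition pb1 := pB (zeta R) (zeta R ^+ 2) (isT : (0 < 6)%N) (isT : (1 < 6)%N) (isT : (2 < 6)%N).
Definition pc1 := pB (zeta R ^+ 2) (zeta R) (isT : (0 < 6)%N) (isT : (1 < 6)%N) (isT : (2 < 6)%N).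
Definition pb2 := pB (zeta R) (zeta R ^+ 2) (isT : (3 < 6)%N) (isT : (4 < 6)%N) (isT : (5 < 6)%N).
Definition pc2 := pB (zeta R ^+ 2) (zeta R) (isT : (3 < 6)%N) (isT : (4 < 6)%N) (isT : (5 < 6)%N).
Definition pa (i j k : nat) (hi : (i < 6)%N) (hj : (j < 6)%N) (hk : (k < 6)%N) : P :=
  pX hi + pX hj + pX hk.
Definition pa1 := pa (isT : (0 < 6)%N) (isT : (1 < 6)%N) (isT : (2 < 6)%N).
Definition pa2 := pa (isT : (3 < 6)%N) (isT : (4 < 6)%N) (isT : (5 < 6)%N).

Lemma b1E : b1 R = tofL pb1.
Proof. by rewrite /pb1 /pB /pX /tofL !tofracD !tofracM. Qed.
Lemma c1E : c1 R = tofL pc1.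
Proof. by rewrite /pc1 /pB /pX /tofL !tofracD !tofracM. Qed.
Lemma b2E : b2 R = tofL pb2.
Proof. by rewrite /pb2 /pB /pX /tofL !tofracD !tofracM. Qed.
Lemma c2E : c2 R = tofL pc2.
Proof. by rewrite /pc2 /pB /pX /tofL !tofracD !tofracM. Qed.
Lemma a1E : a1 R = tofL pa1.
Proof. by rewrite /pa1 /pa /pX /tofL !tofracD. Qed.
Lemma a2E : a2 R = tofL pa2.
Proof. by rewrite /pa2 /pa /pX /tofL !tofracD. Qed.

Lemma pB_neq0 u v i j k hi hj hk : j != i -> k != i -> @pB u v i j k hi hj hk != 0.
Proof.
move=> ji ki; apply/eqP => h.
pose ev (l : 'I_6) : C := (val l == i)%:R.
have := congr1 (meval ev) h.
rewrite /pB /pX !mevalD !mevalM !mevalC !mevalXU /ev /= eqxx (negbTE ji) (negbTE ki).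
rewrite !mulr0 !addr0; by move/eqP; rewrite pnatr_eq0.
Qed.

Lemma b1_neq0 : b1 R != 0.
Proof. rewrite b1E tofL_eq0; exact: pB_neq0. Qed.
Lemma c1_neq0 : c1 R != 0.
Proof. rewrite c1E tofL_eq0; exact: pB_neq0. Qed.


Lemma part1a f : gen_subfield (gensF R) f -> gen_subfield (gensK R) f.
Proof.
apply: (gen_min (gen_subf _)) => i.
set G := gen_subfield (gensK R). have H := gen_subf (gensK R).
have hA1 : G (a1 R) := gen_in (gensK R) (@Ordinal 6 0 isT).
have hA2 : G (a2 R) := gen_in (gensK R) (@Ordinal 6 1 isT).
have hB : G (b1 R ^+ 3) := gen_in (gensK R) (@Ordinal 6 2 isT).
have hP : G (b1 R * c1 R) := gen_in (gensK R) (@Ordinal 6 3 isT).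
have hU : G (b1 R * c2 R) := gen_in (gensK R) (@Ordinal 6 4 isT).
have hV : G (c1 R * b2 R) := gen_in (gensK R) (@Ordinal 6 5 isT).
have [e1 e2] := idF b1_neq0 c1_neq0.
have h2 : (2%:R : L) = cstL 2%:R by rewrite rmorph_nat.
case: i => [[|[|[|[|[|[|k]]]]]] hi]; rewrite /gensF /=.
- exact hA1.
- rewrite /F2 -/(b1 R) -/(c1 R) e1 e2; solveS H.
- rewrite /F3 -/(b1 R) -/(c1 R) e1 e2; solveS H.
- exact hA2.
- rewrite /G1 h2; solveS H.
- rewrite /G2; solveS H.
- by [].
Qed.

Lemma part1b f : gen_subfield (gensK R) f -> gen_subfield (gensF R) f.
Proof.
apply: (gen_min (gen_subf _)) => i.
set G := gen_subfield (gensF R). have H := gen_subf (gensF R).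
have hA1 : G (a1 R) := gen_in (gensF R) (@Ordinal 6 0 isT).
have hA2 : G (a2 R) := gen_in (gensF R) (@Ordinal 6 3 isT).
have hF2 : G (b1 R ^+ 2 / c1 R + c1 R ^+ 2 / b1 R) := gen_in (gensF R) (@Ordinal 6 1 isT).
have hF3 : G ((cstL (iC R))^-1 * (b1 R ^+ 2 / c1 R - c1 R ^+ 2 / b1 R)) :=
  gen_in (gensF R) (@Ordinal 6 2 isT).
have hG1 : G ((b1 R * c2 R + c1 R * b2 R) / 2%:R) := gen_in (gensF R) (@Ordinal 6 4 isT).
have hG2 : G ((b1 R * c2 R - c1 R * b2 R) / cstL (2%:R * iC R)) :=
  gen_in (gensF R) (@Ordinal 6 5 isT).
rewrite rmorphM rmorph_nat in hG2.
have h2 : (2%:R : L) = cstL 2%:R by rewrite rmorph_nat.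
have [eB eP] := idU b1_neq0 c1_neq0 iL_neq0 (natL_neq0 1).
have [eu ev] := idG (b1 R * c2 R) (c1 R * b2 R) iL_neq0 (natL_neq0 1).
case: i => [[|[|[|[|[|[|k]]]]]] hi]; rewrite /gensK /=.
- exact hA1.
- exact hA2.
- rewrite eB h2; solveS H.
- rewrite eP h2; solveS H.
- rewrite eu; solveS H.
- rewrite ev; solveS H.
- by [].
Qed.


Lemma addE (T : zmodType) (a b c d : T) : a = c -> b = d -> a + b = c + d.
Proof. by move=> -> ->. Qed.
Lemma mulE (T : ringType) (a b c d : T) : a = c -> b = d -> a * b = c * d.
Proof. by move=> -> ->. Qed.

Lemma sigmaPXn (p : P) n : sigmaP (p ^+ n) = sigmaP p ^+ n.
Proof. exact: rmorphXn. Qed.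

Lemma sigma3X i : sigmaP (sigmaP (sigmaP ('X_i : P))) = 'X_i.
Proof.
rewrite !sigmaPX /sigma_idx; case: i => [[|[|[|[|[|[|k]]]]]] hi];
  [ rewrite /= (bool_irrelevance hi isT); reflexivity ..
  | exfalso; move: hi; rewrite !ltnS ltn0; done ].
Qed.

Lemma sigma3 (p : P) : sigmaP (sigmaP (sigmaP p)) = p.
Proof.
elim/P6_ind: p => [c|i|p q hp hq|p q hp hq].
- rewrite !sigmaPC; reflexivity.
- exact: sigma3X.
- rewrite !sigmaPD; apply: congr2; [exact hp | exact hq].
- rewrite !sigmaPM; apply: congr2; [exact hp | exact hq].
Qed.

Definition gkP (i : 'I_6) : P := match val i with
  | 0 => pa1 | 1 => pa2 | 2 => pb1 ^+ 3 | 3 => pb1 * pc1 | 4 => pb1 * pc2 | _ => pc1 * pb2 end.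

Lemma gensK_E i : gensK R i = tofL (gkP i).
Proof.
case: i => [[|[|[|[|[|[|k]]]]]] hi]; rewrite /gensK /gkP /=.
- exact: a1E.
- exact: a2E.
- by rewrite b1E /tofL tofracXn.
- by rewrite b1E c1E tofLM.
- by rewrite b1E c2E tofLM.
- by rewrite c1E b2E tofLM.
- by [].
Qed.

Definition wP : P := (zeta R)%:MP.
Lemma wP2 : ((zeta R ^+ 2)%:MP : P) = wP ^+ 2.
Proof. by rewrite rmorphXn. Qed.
Lemma zeta3 : zeta R ^+ 3 = 1.
Proof. apply: cube; apply: zeta_rel. Qed.
Lemma wP3 : wP ^+ 3 = 1.
Proof. by rewrite /wP -rmorphXn zeta3 rmorph1. Qed.

Lemma sig_pb1 : sigmaP pb1 = wP ^+ 2 * pb1.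
Proof. rewrite /pb1 /pB /pX !sigmaPD !sigmaPM !sigmaPC !sigmaPX /= wP2 -/wP. exact: rotB wP3. Qed.
Lemma sig_pb2 : sigmaP pb2 = wP ^+ 2 * pb2.
Proof. rewrite /pb2 /pB /pX !sigmaPD !sigmaPM !sigmaPC !sigmaPX /= wP2 -/wP. exact: rotB wP3. Qed.
Lemma sig_pc1 : sigmaP pc1 = wP * pc1.
Proof. rewrite /pc1 /pB /pX !sigmaPD !sigmaPM !sigmaPC !sigmaPX /= wP2 -/wP. exact: rotC wP3. Qed.
Lemma sig_pc2 : sigmaP pc2 = wP * pc2.
Proof. rewrite /pc2 /pB /pX !sigmaPD !sigmaPM !sigmaPC !sigmaPX /= wP2 -/wP. exact: rotC wP3. Qed.

Lemma sigma_gk i : sigmaP (gkP i) = gkP i.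
Proof.
case: i => [[|[|[|[|[|[|k]]]]]] hi]; rewrite /gkP /=.
- by rewrite /pa1 /pa /pX !sigmaPD !sigmaPX /= rot3.
- by rewrite /pa2 /pa /pX !sigmaPD !sigmaPX /= rot3.
- by rewrite sigmaPXn sig_pb1 (pow3_w _ wP3).
- by rewrite sigmaPM sig_pb1 sig_pc1 (pow_w1 _ _ wP3).
- by rewrite sigmaPM sig_pb1 sig_pc2 (pow_w1 _ _ wP3).
- by rewrite sigmaPM sig_pc1 sig_pb2 (pow_w2 _ _ wP3).
- by [].
Qed.

Lemma part2a f : gen_subfield (gensK R) f -> z3_invariant f.
Proof.
move=> [p [q [hq ->]]].
have key : forall p, evalL (gensK R) p = tofL (mmap (@mpolyC 6 C) gkP p) /\
   sigmaP (mmap (@mpolyC 6 C) gkP p) = mmap (@mpolyC 6 C) gkP p.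
  elim/P6_ind => [c|i|p1 q1 [h1 h1'] [h2 h2']|p1 q1 [h1 h1'] [h2 h2']].
  - rewrite evalLC. rewrite mmapC. rewrite sigmaPC. rewrite /=. split. reflexivity. reflexivity.
  - rewrite evalLX mmapX mmap1U gensK_E sigma_gk. split. reflexivity. reflexivity.
  - rewrite evalLD mmapD sigmaPD tofLD. split; [exact (addE h1 h2) | exact (addE h1' h2')].
  - rewrite evalLM !rmorphM sigmaPM tofLM. split; [exact (mulE h1 h2) | exact (mulE h1' h2')].
have [ep sp] := key p; have [eq sq] := key q.
exists (mmap (@mpolyC 6 C) gkP p), (mmap (@mpolyC 6 C) gkP q); split.
  apply/eqP => hQ; move/eqP: hq; apply. rewrite eq hQ tofL0. reflexivity.
split. rewrite ep eq. reflexivity.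
rewrite ep eq. exact (congr2 (fun a b => tofL a / tofL b) sp sq).
Qed.


Lemma tripleE' (F : fieldType) (w x y z b' c' B Cc k : F) :
  1 + w + w ^+ 2 = 0 -> 3%:R * k = 1 -> b' != 0 -> c' != 0 ->
  B = x + w * y + w ^+ 2 * z -> Cc = x + w ^+ 2 * y + w * z ->
  [/\ x = (x + y + z) * k + (k * ((c' * B) / (b' * c'))) * b' + (k * ((b' * Cc) / (b' * c'))) * c',
      y = (x + y + z) * k + (k * ((c' * B) / (b' * c'))) * (w ^+ 2 * b')
          + (k * ((b' * Cc) / (b' * c'))) * (w * c') &
      z = (x + y + z) * k + (k * ((c' * B) / (b' * c'))) * (w * b')
          + (k * ((b' * Cc) / (b' * c'))) * (w ^+ 2 * c')].
Proof. move=> hw hk hb hc -> ->; exact: tripleE. Qed.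

Lemma sM_gen (T : comRingType) (sp p q sq ssq sssq : T) :
  sssq = q -> sp * q = p * sq -> sp * (ssq * sssq) = p * (sq * ssq).
Proof. move=> -> h; rewrite mulrCA h; ring. Qed.

Lemma sN_gen (T : comRingType) (q sq ssq sssq : T) :
  sssq = q -> sq * (ssq * sssq) = q * (sq * ssq).
Proof. move=> ->; ring. Qed.

Lemma frac_mul (F : fieldType) (a b c : F) : c != 0 -> a / b = (a * c) / (b * c).
Proof. move=> hc; rewrite invfM mulrACA divff; [by rewrite mulr1 | exact hc]. Qed.

Definition GK := gen_subfield (gensK R).
Definition Tsig (p : P) := exists s0 s1 s2, GK s0 /\ GK s1 /\ GK s2 /\
  tofL p = s0 + s1 * b1 R + s2 * c1 R /\
  tofL (sigmaP p) = s0 + s1 * (wL ^+ 2 * b1 R) + s2 * (wL * c1 R) /\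
  tofL (sigmaP (sigmaP p)) = s0 + s1 * (wL * b1 R) + s2 * (wL ^+ 2 * c1 R).

Ltac split6 := split; [|split; [|split; [|split; [|split]]]].

Lemma wL3 : wL ^+ 3 = 1.
Proof. exact: (cube wL_rel). Qed.

Lemma GK_subf : subf GK.
Proof. exact: gen_subf. Qed.
Lemma GKw : GK wL.
Proof. exact: (sC GK_subf). Qed.

Lemma Tsig_shift p : Tsig p -> Tsig (sigmaP p).
Proof.
case=> s0 [s1 [s2 [h0 [h1 [h2 [e0 [e1 e2]]]]]]].
have H := GK_subf.
have [f1 f2 f3] := shiftE s0 s1 s2 (b1 R) (c1 R) wL3.
exists s0, (s1 * wL ^+ 2), (s2 * wL); split6.
- exact h0.
- apply: (sM H); first exact h1. apply: (sX H); exact GKw.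
- apply: (sM H); first exact h2. exact GKw.
- exact (etrans e1 f1).
- exact (etrans e2 f2).
- exact (etrans (congr1 (@tofL R) (sigma3 p)) (etrans e0 f3)).
Qed.

Lemma bE1 : b1 R = x1 R + wL * y1 R + wL ^+ 2 * z1 R.
Proof. by rewrite /b1 /bF wL2. Qed.
Lemma cE1 : c1 R = x1 R + wL ^+ 2 * y1 R + wL * z1 R.
Proof. by rewrite /c1 /cF wL2. Qed.
Lemma bE2 : b2 R = x2 R + wL * y2 R + wL ^+ 2 * z2 R.
Proof. by rewrite /b2 /bF wL2. Qed.
Lemma cE2 : c2 R = x2 R + wL ^+ 2 * y2 R + wL * z2 R.
Proof. by rewrite /c2 /cF wL2. Qed.

Lemma hk3 : 3%:R * cstL (3%:R^-1 : C) = 1.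
Proof.
rewrite -(rmorph_nat (@cstL R) 3) -rmorphM mulfV; first exact: rmorph1.
exact: natC_neq0.
Qed.

Lemma Tsig_X0 : Tsig 'X_(@Ordinal 6 0 isT).
Proof.
have H := GK_subf.
have hA : GK (x1 R + y1 R + z1 R) := gen_in (gensK R) (@Ordinal 6 0 isT).
have hP : GK (b1 R * c1 R) := gen_in (gensK R) (@Ordinal 6 3 isT).
have hPc : GK (c1 R * b1 R) by rewrite mulrC; exact hP.
have [e0 e1 e2] := tripleE' wL_rel hk3 b1_neq0 c1_neq0 bE1 cE1.
exists ((x1 R + y1 R + z1 R) * cstL (3%:R^-1)),
  (cstL (3%:R^-1) * ((c1 R * b1 R) / (b1 R * c1 R))),
  (cstL (3%:R^-1) * ((b1 R * c1 R) / (b1 R * c1 R))); split6.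
- solveS H.
- solveS H.
- solveS H.
- exact e0.
- rewrite sigmaPX /sigma_idx /=; exact e1.
- rewrite !sigmaPX /sigma_idx /=; exact e2.
Qed.

Lemma Tsig_X3 : Tsig 'X_(@Ordinal 6 3 isT).
Proof.
have H := GK_subf.
have hA : GK (x2 R + y2 R + z2 R) := gen_in (gensK R) (@Ordinal 6 1 isT).
have hU : GK (b1 R * c2 R) := gen_in (gensK R) (@Ordinal 6 4 isT).
have hV : GK (c1 R * b2 R) := gen_in (gensK R) (@Ordinal 6 5 isT).
have hP : GK (b1 R * c1 R) := gen_in (gensK R) (@Ordinal 6 3 isT).
have [e0 e1 e2] := tripleE' wL_rel hk3 b1_neq0 c1_neq0 bE2 cE2.
exists ((x2 R + y2 R + z2 R) * cstL (3%:R^-1)),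
  (cstL (3%:R^-1) * ((c1 R * b2 R) / (b1 R * c1 R))),
  (cstL (3%:R^-1) * ((b1 R * c2 R) / (b1 R * c1 R))); split6.
- solveS H.
- solveS H.
- solveS H.
- exact e0.
- rewrite sigmaPX /sigma_idx /=; exact e1.
- rewrite !sigmaPX /sigma_idx /=; exact e2.
Qed.


Lemma sigmaP0 : sigmaP (0 : P) = 0.
Proof. exact: mmap0. Qed.

Lemma Tsig_all p : Tsig p.
Proof.
have H := GK_subf.
have hP : GK (b1 R * c1 R) := gen_in (gensK R) (@Ordinal 6 3 isT).
have hB : GK (b1 R ^+ 3) := gen_in (gensK R) (@Ordinal 6 2 isT).
have hPn : b1 R * c1 R != 0 := mulf_neq0 b1_neq0 c1_neq0.
have hBn : b1 R ^+ 3 != 0 := expf_neq0 3 b1_neq0.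
have G0 : GK 0 by rewrite -(rmorph0 (@cstL R)); exact: (sC H).
elim/P6_ind: p => [c|i|p q hp hq|p q hp hq].
- exists (cstL c), 0, 0; split6.
  + exact: (sC H).
  + exact G0.
  + exact G0.
  + rewrite !mul0r !addr0; reflexivity.
  + rewrite sigmaPC !mul0r !addr0; reflexivity.
  + rewrite !sigmaPC !mul0r !addr0; reflexivity.
- case: i => [[|[|[|[|[|[|k]]]]]] hi].
  + rewrite (bool_irrelevance hi isT); exact Tsig_X0.
  + rewrite (bool_irrelevance hi isT).
    have -> : 'X_(@Ordinal 6 1 isT) = sigmaP 'X_(@Ordinal 6 0 isT) :> P
      by rewrite sigmaPX /sigma_idx /=.
    exact (Tsig_shift Tsig_X0).
  + rewrite (bool_irrelevance hi isT).
    have -> : 'X_(@Ordinal 6 2 isT) = sigmaP (sigmaP 'X_(@Ordinal 6 0 isT)) :> P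
      by rewrite !sigmaPX /sigma_idx /=.
    exact (Tsig_shift (Tsig_shift Tsig_X0)).
  + rewrite (bool_irrelevance hi isT); exact Tsig_X3.
  + rewrite (bool_irrelevance hi isT).
    have -> : 'X_(@Ordinal 6 4 isT) = sigmaP 'X_(@Ordinal 6 3 isT) :> P
      by rewrite sigmaPX /sigma_idx /=.
    exact (Tsig_shift Tsig_X3).
  + rewrite (bool_irrelevance hi isT).
    have -> : 'X_(@Ordinal 6 5 isT) = sigmaP (sigmaP 'X_(@Ordinal 6 3 isT)) :> P
      by rewrite !sigmaPX /sigma_idx /=.
    exact (Tsig_shift (Tsig_shift Tsig_X3)).
  + exfalso; move: hi; rewrite !ltnS ltn0; done.
- case: hp => s0 [s1 [s2 [h0 [h1 [h2 [e0 [e1 e2]]]]]]].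
  case: hq => t0 [t1 [t2 [g0 [g1 [g2 [f0 [f1 f2]]]]]]].
  exists (s0 + t0), (s1 + t1), (s2 + t2); split6.
  + exact: (sD H).
  + exact: (sD H).
  + exact: (sD H).
  + exact (etrans (tofLD p q) (etrans (addE e0 f0) (decD _ _ _ _ _ _ _ _))).
  + exact (etrans (congr1 (@tofL R) (sigmaPD p q))
           (etrans (tofLD _ _) (etrans (addE e1 f1) (decD _ _ _ _ _ _ _ _)))).
  + exact (etrans (congr1 (@tofL R) (etrans (congr1 (@sigmaP R) (sigmaPD p q)) (sigmaPD _ _)))
           (etrans (tofLD _ _) (etrans (addE e2 f2) (decD _ _ _ _ _ _ _ _)))).
- case: hp => s0 [s1 [s2 [h0 [h1 [h2 [e0 [e1 e2]]]]]]].
  case: hq => t0 [t1 [t2 [g0 [g1 [g2 [f0 [f1 f2]]]]]]].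
  exists (s0 * t0 + (s1 * t2 + s2 * t1) * (b1 R * c1 R)),
    (s0 * t1 + s1 * t0 + s2 * t2 * ((b1 R * c1 R) ^+ 2 / b1 R ^+ 3)),
    (s0 * t2 + s2 * t0 + s1 * t1 * (b1 R ^+ 3 / (b1 R * c1 R))); split6.
  + solveS H.
  + solveS H.
  + solveS H.
  + exact (etrans (tofLM p q) (etrans (mulE e0 f0)
       (decM s0 s1 s2 t0 t1 t2 (erefl (b1 R * c1 R)) (erefl (b1 R ^+ 3)) hPn hBn))).
  + exact (etrans (congr1 (@tofL R) (sigmaPM p q))
       (etrans (tofLM _ _) (etrans (mulE e1 f1)
       (decM s0 s1 s2 t0 t1 t2 (pow_w1 _ _ wL3) (pow3_w _ wL3) hPn hBn)))).
  + exact (etrans (congr1 (@tofL R) (etrans (congr1 (@sigmaP R) (sigmaPM p q)) (sigmaPM _ _)))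
       (etrans (tofLM _ _) (etrans (mulE e2 f2)
       (decM s0 s1 s2 t0 t1 t2 (pow_w2 _ _ wL3) (pow3_w1 _ wL3) hPn hBn)))).
Qed.

Lemma inv_in M : sigmaP M = M -> GK (tofL M).
Proof.
move=> hM; have [s0 [s1 [s2 [h0 [_ [_ [e0 [e1 e2]]]]]]]] := Tsig_all M.
have e1' : tofL M = s0 + s1 * (wL ^+ 2 * b1 R) + s2 * (wL * c1 R) :=
  etrans (congr1 (@tofL R) (esym hM)) e1.
have e2' : tofL M = s0 + s1 * (wL * b1 R) + s2 * (wL ^+ 2 * c1 R) :=
  etrans (congr1 (@tofL R) (esym (etrans (congr1 (@sigmaP R) hM) hM))) e2.
have -> : tofL M = s0 := avg wL_rel (natL_neq0 2) e0 e1' e2'.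
exact h0.
Qed.

Lemma part2b f : z3_invariant f -> gen_subfield (gensK R) f.
Proof.
move=> [p [q [hq [hf hs]]]].
have H := GK_subf.
have sq0 : sigmaP q != 0.
  apply/eqP => h; move/eqP: hq; apply.
  exact (etrans (esym (sigma3 q)) (etrans (congr1 (fun t => sigmaP (sigmaP t)) h)
          (etrans (congr1 (@sigmaP R) sigmaP0) sigmaP0))).
have ssq0 : sigmaP (sigmaP q) != 0.
  apply/eqP => h; move/eqP: hq; apply.
  exact (etrans (esym (sigma3 q)) (etrans (congr1 (@sigmaP R) h) sigmaP0)).
have tq : tofL q != 0 by rewrite tofL_eq0.
have tsq : tofL (sigmaP q) != 0 by rewrite tofL_eq0.
have tssq : tofL (sigmaP (sigmaP q)) != 0 by rewrite tofL_eq0.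
have cross : sigmaP p * q = p * sigmaP q.
  apply: tofL_inj.
  exact (etrans (tofLM _ _) (etrans (cross_mul tsq tq (etrans hs hf)) (esym (tofLM _ _)))).
have sMM : sigmaP (p * (sigmaP q * sigmaP (sigmaP q))) = p * (sigmaP q * sigmaP (sigmaP q)).
  exact (etrans (sigmaPM _ _) (etrans (congr1 (fun t => sigmaP p * t) (sigmaPM _ _))
          (sM_gen _ (sigma3 q) cross))).
have sNN : sigmaP (q * (sigmaP q * sigmaP (sigmaP q))) = q * (sigmaP q * sigmaP (sigmaP q)).
  exact (etrans (sigmaPM _ _) (etrans (congr1 (fun t => sigmaP q * t) (sigmaPM _ _))
          (sN_gen _ _ (sigma3 q)))).
have ef : f = tofL (p * (sigmaP q * sigmaP (sigmaP q))) / tofL (q * (sigmaP q * sigmaP (sigmaP q))).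
  rewrite hf !tofLM; apply: frac_mul; exact (mulf_neq0 tsq tssq).
rewrite ef; apply: (sM H); first exact (inv_in sMM).
apply: (sV H); exact (inv_in sNN).
Qed.

End Main.

Theorem mainTheorem7 (R : rcfType) :
  (forall f : L6 R, gen_subfield (@gensF R) f <-> gen_subfield (@gensK R) f) /\
  (forall f : L6 R, gen_subfield (@gensK R) f <-> @z3_invariant R f).
Proof.
split=> f; split.
- exact: part1a.
- exact: part1b.
- exact: part2a.
- exact: part2b.
Qed.
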